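(* Let $p,n\in\mathbb N$ with $p\ge n\ge 5$ and $n-1\nmid p$. Then $$\frac{(n-2)p}{2}-\frac{(n-1)^2}{8}\le ex(p;T_n^2)\le \frac{(n-2)(p-1)}{2}.$$
   Context: All graphs are finite and simple; a graph ''contains'' $H$ if it has a subgraph isomorphic to $H$. For a graph $L$ and $p\in\mathbb N$, $ex(p;L)$ is the maximum number of edges in a graph on $p$ vertices containing no copy of $L$. For $n\ge 5$, $T_n^2$ is the tree with vertex set $\{v_0,\ldots,v_{n-1}\}$ and edge set $\{v_0v_1,\ldots,v_0v_{n-3},\,v_{n-3}v_{n-2},\,v_{n-3}v_{n-1}\}$. *)

(* Defs.v *)
From mathcomp Require Import all_boot.
Set Implicit Arguments. Unset Strict Implicit. Unset Printing Implicit Defensive.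

Definition simple_graph (V : finType) (G : {set {set V}}) : bool :=
  [forall e in G, #|e| == 2].

Definition contains (V W : finType) (G : {set {set V}}) (H : {set {set W}}) : bool :=
  [exists f : {ffun W -> V}, injectiveb f && [forall e in H, (f @: e) \in G]].

Definition ex (p : nat) (W : finType) (L : {set {set W}}) : nat :=
  \max_(G : {set {set 'I_p}} | simple_graph G && ~~ contains G L) #|G|.

Definition T2edge (n i j : nat) : bool :=
  ((i == 0) && (1 <= j <= n - 3)) ||
  ((i == n - 3) && ((j == n - 2) || (j == n - 1))).

Definition T2 (n : nat) : {set {set 'I_n}} :=
  [set e : {set 'I_n} | [exists i : 'I_n, exists j : 'I_n,
     (e == [set i; j]) && T2edge n i j]].

(* Main.v *)
Require Import Defs.
From mathcomp Require Import all_boot zify.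
Set Implicit Arguments. Unset Strict Implicit. Unset Printing Implicit Defensive.

Section Graph.
Variable V : finType.
Variable G : {set {set V}}.
Hypothesis sG : simple_graph G.

Definition N (v : V) : {set V} := [set u | [set v; u] \in G].
Local Notation deg v := #|N v|.

Lemma inN u v : (u \in N v) = ([set v; u] \in G).
Proof. by rewrite inE. Qed.

Lemma N_sym u v : (u \in N v) = (v \in N u).
Proof. by rewrite !inN setUC. Qed.

Lemma edge2 e : e \in G -> #|e| = 2.
Proof. by move=> eG; move/forall_inP: sG => /(_ e eG) /eqP. Qed.

Lemma N_irr v : v \notin N v.
Proof. apply/negP; rewrite inN => /edge2; by rewrite setUid cards1. Qed.

Lemma N_neq u v : u \in N v -> u != v.
Proof. by apply: contraTneq => ->; exact: N_irr. Qed.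

Lemma degE v : deg v = \sum_(e in G) (v \in e).
Proof.
rewrite (big_mkcond (fun e => e \in G)) /=.
rewrite -(@card_in_imset _ _ (fun u => [set v; u])); last first.
  move=> x y; rewrite !inN => xG _ /setP /(_ x); rewrite !inE eqxx orbT.
  move/esym/orP => [/eqP xv|/eqP //]; move: xG; rewrite xv setUid => /edge2.
  by rewrite cards1.
rewrite -sum1_card big_mkcond /=; apply: eq_bigr => e _.
case eG: (e \in G); last first.
  case: ifP => //; case/imsetP => u; rewrite inN => uG eu; by move: eG; rewrite eu uG.
suff -> : (e \in [set [set v; u] | u in N v]) = (v \in e) by [].
apply/imsetP/idP => [[u _ ->]|ve]; first by rewrite set21.
have /cards2P [x [y [xy exy]]] : #|e| == 2 by rewrite edge2.
move: ve; rewrite exy !inE => /orP [] /eqP ->.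
  by exists y; rewrite ?inN -?exy.
by exists x; rewrite ?inN setUC -?exy.
Qed.

Lemma handshake : \sum_v deg v = 2 * #|G|.
Proof.
under eq_bigr do rewrite degE.
rewrite exchange_big /= mulnC -sum_nat_const; apply: eq_bigr => e eG.
by rewrite -(edge2 eG) -sum1_card [RHS]big_mkcond.
Qed.

Lemma T_found n (hn : 5 <= n) a b y z (L : {set V}) :
  b \in N a -> y \in N b -> z \in N b -> y != z -> y != a -> z != a ->
  L \subset N a -> b \notin L -> y \notin L -> z \notin L -> n - 4 <= #|L| ->
  contains G (T2 n).
Proof.
have [m ->] : exists m, n = m.+4 by exists (n - 4); lia.
have -> : m.+4 - 4 = m by lia.
move=> ba yb zb yz ya za LN bL yL zL hL.
set t := take m (enum L).
have st : size t = m by rewrite size_takel // -cardE.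
have tL x : x \in t -> x \in L by move/mem_take; rewrite mem_enum.
set s := a :: t ++ [:: b; y; z].
have ss : size s = m.+4 by rewrite /= size_cat st addn3.
have aL : a \notin L.
  by apply/negP => /(subsetP LN); rewrite (negbTE (N_irr a)).
have us : uniq s.
  rewrite /= cat_uniq mem_cat negb_or take_uniq ?enum_uniq //= !inE.
  have nt x : x \notin L -> x \notin t by apply: contra => /tL.
  rewrite !negb_or; apply/and5P; split => //.
  - apply/and4P; split; first exact: nt.
    + by rewrite eq_sym N_neq.
    + by rewrite eq_sym ya.
    + by rewrite eq_sym za.
  - by rewrite (negbTE (nt _ bL)) (negbTE (nt _ yL)) (negbTE (nt _ zL)).
  - by rewrite eq_sym (N_neq yb) eq_sym (N_neq zb).
pose f := [ffun i : 'I_m.+4 => nth a s i].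
apply/existsP; exists f; apply/andP; split.
  apply/injectiveP => i j; rewrite !ffunE => /eqP.
  by rewrite nth_uniq ?ss // => /eqP /val_inj.
have hL' j : 0 < j <= m -> nth a s j \in L.
  case: j => [|j] hj; first by [].
  have -> : nth a s j.+1 = nth a t j.
    by rewrite [LHS]/= nth_cat st ifT //; case/andP: hj.
  by apply: tL; apply: mem_nth; rewrite st; case/andP: hj.
have hs j : nth a s j.+1 = nth a (t ++ [:: b; y; z]) j := erefl.
have hb : nth a s m.+1 = b.
  by rewrite hs nth_cat st ltnn subnn.
have hy : nth a s m.+2 = y.
  rewrite hs nth_cat st ifF; last by clear -m; lia.
  by rewrite subSnn.
have hz : nth a s m.+3 = z.
  rewrite hs nth_cat st ifF; last by clear -m; lia.
  by have -> : m.+2 - m = 2 by clear -m; lia.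
apply/forall_inP => e; rewrite inE => /existsP [i /existsP [j /andP [/eqP -> hij]]].
rewrite imsetU1 imset_set1 !ffunE -inN.
move: hij; rewrite /T2edge.
have -> : m.+4 - 3 = m.+1 by clear; lia.
have -> : m.+4 - 2 = m.+2 by clear; lia.
have -> : m.+4 - 1 = m.+3 by clear; lia.
case/orP => /andP [/eqP -> hj].
  case/andP: hj => hj1 hj2; case: (ltngtP j m.+1) => hj'.
  - by apply: (subsetP LN); apply: hL'; rewrite hj1.
  - by move: hj2; rewrite leqNgt hj'.
  - by rewrite hj' hb.
rewrite hb; case/orP: hj => /eqP ->; by rewrite ?hy ?hz.
Qed.

Lemma cardD1_ge (A : {set V}) x : #|A| - 1 <= #|A :\ x|.
Proof. rewrite [X in X - 1](cardsD1 x A); case: (x \in A); lia. Qed.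

Lemma cardD_ge (A B : {set V}) : #|A| - #|B| <= #|A :\: B|.
Proof.
rewrite cardsD; apply: leq_sub2l; apply: subset_leq_card; exact: subsetIr.
Qed.

Lemma pick2 (A : {set V}) : 2 <= #|A| -> exists y z, [/\ y \in A, z \in A & y != z].
Proof.
move=> hA; have /card_gt0P [y yA] : 0 < #|A| by apply: leq_trans hA.
have : 0 < #|A :\ y| by have := cardD1_ge A y; lia.
case/card_gt0P => z; rewrite !inE => /andP [zy zA].
by exists y, z; rewrite eq_sym.
Qed.

Lemma sub_exact (A : {set V}) m : m <= #|A| -> exists L : {set V}, L \subset A /\ #|L| = m.
Proof.
elim: m => [|m IH] hm; first by exists (set0 : {set V}); rewrite sub0set cards0.
have [L [LA cL]] := IH (ltnW hm).
have : 0 < #|A :\: L| by have := cardD_ge A L; lia.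
case/card_gt0P => x; rewrite inE => /andP [xL xA].
exists (x |: L); split; first by rewrite subUset sub1set xA LA.
by rewrite cardsU1 xL cL.
Qed.

Variable n : nat.
Hypothesis hn : 5 <= n.
Hypothesis nT : ~~ contains G (T2 n).

Lemma F1 a b : n - 1 <= deg a -> b \in N a -> deg b <= 2.
Proof.
move=> da ba; rewrite leqNgt; apply/negP => db.
have := cardD1_ge (N b) a; move=> hB.
have hb2 : 2 <= #|N b :\ a| by lia.
have [y [z [yB zB yz]]] := pick2 hb2.
move: yB zB; rewrite !in_setD1 => /andP [ya yb] /andP [za zb].
set L := N a :\ b :\ y :\ z.
have hL : n - 4 <= #|L|.
  have h1 := cardD1_ge (N a) b; have h2 := cardD1_ge (N a :\ b) y.
  have h3 := cardD1_ge (N a :\ b :\ y) z; rewrite /L; lia.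
move/negP: nT; apply; apply: (@T_found n hn a b y z L) => //.
- by apply/subsetP => x; rewrite !in_setD1 => /and4P [].
- by rewrite !inE eqxx !andbF.
- by rewrite !inE eqxx !andbF.
- by rewrite !inE eqxx.
Qed.

Lemma F5 a b : n - 1 <= deg b -> a \in N b -> n - 3 <= deg a -> False.
Proof.
move=> db ab da.
have h0 : n - 4 <= #|N a :\ b|.
  by have := cardD1_ge (N a) b; lia.
have [L0 [L0A cL0]] := sub_exact h0.
have h1 := cardD1_ge (N b) a; have h2 := cardD_ge (N b :\ a) L0.
have h3 : 2 <= #|N b :\ a :\: L0| by lia.
have [y [z [yB zB yz]]] := pick2 h3.
move: yB zB; rewrite in_setD !in_setD1 => /and3P [yL ya yb]; rewrite in_setD !in_setD1 => /and3P [zL za zb].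
move/negP: nT; apply; apply: (@T_found n hn a b y z L0) => //.
- by rewrite N_sym.
- by apply: subset_trans L0A _; apply/subsetP => x; rewrite in_setD1 => /andP [].
- by apply/negP => /(subsetP L0A); rewrite !inE eqxx.
- by rewrite cL0.
Qed.

Lemma F2 a b w : n - 2 <= deg a -> b \in N a -> w \in N b -> w \notin N a ->
  w != a -> deg b <= 2.
Proof.
move=> da ba wb wa wna; rewrite leqNgt; apply/negP => db.
have h1 := cardD1_ge (N b) a; have h2 := cardD1_ge (N b :\ a) w.
have /card_gt0P [z] : 0 < #|N b :\ a :\ w| by lia.
rewrite !in_setD1 => /and3P [zw za zb].
set L := N a :\ b :\ z.
have hL : n - 4 <= #|L|.
  have h3 := cardD1_ge (N a) b; have h4 := cardD1_ge (N a :\ b) z.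
  rewrite /L; lia.
move/negP: nT; apply; apply: (@T_found n hn a b w z L) => //.
- by rewrite eq_sym.
- by apply/subsetP => x; rewrite !in_setD1 => /and3P [].
- by rewrite !inE eqxx !andbF.
- by apply: contra wa; rewrite !in_setD1 => /and3P [].
- by rewrite !inE eqxx.
Qed.


Lemma cardEsum (A : {set V}) : #|A| = \sum_u (u \in A).
Proof. by rewrite -sum1_card big_mkcond; apply: eq_bigr => u _; case: (u \in A). Qed.

Lemma sum_sub (A : {set V}) F : \sum_(v in A) F v <= \sum_v F v.
Proof. by rewrite big_mkcond; apply: leq_sum => v _; case: (v \in A). Qed.

Lemma caseA : [exists v, n - 1 <= deg v] -> \sum_v deg v <= (n - 2) * (#|V| - 1).
Proof.
case/existsP => v0 hv0.
set Bg := [set v | n - 1 <= deg v].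
have step1 : \sum_v deg v = \sum_v (#|N v :&: Bg| + (v \notin Bg) * deg v).
  rewrite big_split /=.
  have -> : \sum_v #|N v :&: Bg| = \sum_v (v \in Bg) * deg v.
    under eq_bigr do rewrite cardEsum.
    under [RHS]eq_bigr do rewrite cardEsum big_distrr /=.
    rewrite [RHS]exchange_big /=; apply: eq_bigr => u _; apply: eq_bigr => v _.
    by rewrite in_setI N_sym; case: (u \in N v); case: (v \in Bg).
  rewrite -big_split /=; apply: eq_bigr => v _.
  by case: (v \in Bg); rewrite /= ?mul1n ?mul0n ?addn0 ?add0n.
rewrite step1.
have step2 v : #|N v :&: Bg| + (v \notin Bg) * deg v <= (v \notin Bg) * (n - 2).
  case vB: (v \in Bg) => /=.
    suff -> : #|N v :&: Bg| = 0 by [].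
    suff : ~~ (0 < #|N v :&: Bg|) by rewrite lt0n negbK => /eqP.
    apply/negP => /card_gt0P [u]; rewrite in_setI => /andP [uv uB].
    move: vB uB; rewrite !inE => vB uB.
    have := F1 uB (_ : v \in N u); rewrite -N_sym => /(_ uv); lia.
  have dv : deg v <= n - 2 by move: vB; rewrite inE; lia.
  case: (posnP #|N v :&: Bg|) => [->|]; first by rewrite add0n !mul1n.
  case/card_gt0P => u; rewrite in_setI => /andP [uv uB]; rewrite inE in uB.
  have h1 := F1 uB (_ : v \in N u); rewrite -N_sym in h1; have {h1} h1 := h1 uv.
  have h2 : deg v < n - 3.
    by rewrite ltnNge; apply/negP => h; apply: (F5 uB (_ : v \in N u) h); rewrite -N_sym.
  have h3 : #|N v :&: Bg| <= deg v by apply: subset_leq_card; exact: subsetIl.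
  rewrite !mul1n; lia.
apply: (@leq_trans (\sum_v (v \notin Bg) * (n - 2))); first by apply: leq_sum => v _; exact: step2.
have -> : \sum_v (v \notin Bg) * (n - 2) = #|~: Bg| * (n - 2).
  rewrite -sum_nat_const [RHS]big_mkcond /=; apply: eq_bigr => v _.
  by rewrite in_setC; case: (v \in Bg); rewrite /= ?mul1n ?mul0n.
have := cardsC Bg; have : v0 \in Bg by rewrite inE.
move=> vB; have : 0 < #|Bg| by apply/card_gt0P; exists v0.
move=> h1 h2; rewrite mulnC; apply: leq_mul => //; lia.
Qed.

Lemma sum_def (hdeg : forall v, deg v <= n - 2) :
  \sum_v deg v + \sum_v (n - 2 - deg v) = #|V| * (n - 2).
Proof.
rewrite -big_split /=; under eq_bigr do rewrite subnKC ?hdeg //.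
by rewrite sum_nat_const cardE.
Qed.

Lemma caseB1 a b w : n - 2 <= deg a -> deg a <= n - 2 -> b \in N a -> w \in N b ->
  w \notin N a -> w != a -> forall u, u \in N a -> deg u <= n - 3.
Proof.
move=> da1 da2 ba wb wa wna.
have db : deg b <= 2 by apply: (F2 da1 ba wb wa wna).
move=> u ua; case: (eqVneq u b) => [-> | ub]; first by lia.
case: (leqP (deg u) 2) => du; first by lia.
have hNu : N u \subset ((a |: N a) :\ u) :\ b.
  apply/subsetP => x xu; rewrite !in_setD1 in_setU1 (N_neq xu) /=.
  apply/andP; split.
    apply: contraTneq xu => ->; apply/negP => bu.
    have : u |: [set a; w] \subset N b.
      apply/subsetP => y; rewrite !inE => /orP [|/orP []] /eqP ->; rewrite -inN //.
        by rewrite N_sym.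
      by rewrite N_sym.
    move/subset_leq_card; rewrite cardsU1 cards2 !inE negb_or.
    rewrite (N_neq ua) /= (_ : a != w); last by rewrite eq_sym.
    have -> : u != w by apply: contraNneq wa => <-.
    by move=> h; move: db; rewrite leqNgt; move/negP; apply; apply: leq_trans h.
  case: (boolP (x \in N a)) => xa; first by rewrite orbT.
  case: (eqVneq x a) => // xna.
  have := F2 da1 ua xu xa xna; lia.
move/subset_leq_card: hNu.
have h1 := cardsD1 b ((a |: N a) :\ u); have h2 := cardsD1 u (a |: N a).
have h3 := cardsU1 a (N a).
have m1 : b \in (a |: N a) :\ u by rewrite in_setD1 in_setU1 ba orbT eq_sym ub.
have m2 : u \in a |: N a by rewrite in_setU1 ua orbT.
rewrite m1 in h1; rewrite m2 in h2; rewrite (negbTE (N_irr a)) /= in h3.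
lia.
Qed.


Lemma caseB (hdeg : forall v, deg v <= n - 2) (hdiv : ~~ (n - 1 %| #|V|)) :
  \sum_v deg v <= (n - 2) * (#|V| - 1).
Proof.
suff hd : n - 2 <= \sum_v (n - 2 - deg v).
  have := sum_def hdeg; move=> h; rewrite mulnBr muln1 [(n - 2) * _]mulnC; lia.
case: (boolP [exists a, exists b, exists w,
   [&& n - 2 <= deg a, b \in N a, w \in N b, w \notin N a & w != a]]).
  case/existsP => a /existsP [b /existsP [w /and5P [da ba wb wa wna]]].
  have hu := caseB1 da (hdeg a) ba wb wa wna.
  apply: leq_trans (sum_sub (N a) _).
  have : \sum_(v in N a) 1 <= \sum_(v in N a) (n - 2 - deg v).
    by apply: leq_sum => v /hu; lia.
  rewrite sum1_card; lia.
move=> nex.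
have hcl a b w : n - 2 <= deg a -> b \in N a -> w \in N b -> (w \in N a) || (w == a).
  move=> da ba wb; case: (boolP ((w \in N a) || (w == a))) => // /norP [wa wna].
  move/negP: nex; case.
  by apply/existsP; exists a; apply/existsP; exists b; apply/existsP; exists w;
    rewrite da ba wb wa wna.
pose cl a := a |: N a.
pose X := [set a | deg a == n - 2].
have hclos a x y : a \in X -> x \in cl a -> y \in N x -> y \in cl a.
  rewrite inE => /eqP da; rewrite !in_setU1 => /orP [/eqP -> -> | xa yx].
    by rewrite orbT.
  by rewrite orbC; apply: hcl yx => //; rewrite da.
have hsub a a' v : a \in X -> a' \in X -> v \in cl a -> v \in cl a' ->
    cl a' \subset cl a.
  move=> aX aX' va va'.
  have a'a : a' \in cl a.
    move: va'; rewrite in_setU1 => /orP [/eqP <- //| va'].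
    by apply: (hclos a v a') => //; rewrite N_sym.
  apply/subsetP => y; rewrite in_setU1 => /orP [/eqP -> // | ya'].
  exact: (hclos a a' y).
pose P := cl @: X.
have hpart : partition P (cover P).
  rewrite /partition eqxx /=; apply/andP; split.
    apply/trivIsetP => A B /imsetP [a aX ->] /imsetP [a' aX' ->] neq.
    rewrite -setI_eq0; apply/negPn/negP => /set0Pn [v]; rewrite in_setI => /andP [va va'].
    move/negP: neq; apply; rewrite eqEsubset.
    by rewrite (hsub a' a v) ?(hsub a a' v).
  apply/negP => /imsetP [a aX e].
  by have := setU11 a (N a); rewrite -/(cl a) -e inE.
have huni : {in P, forall A : {set V}, #|A| = n - 1}.
  move=> A /imsetP [a aX ->]; move: aX; rewrite inE => /eqP da.
  rewrite cardsU1 (N_irr a) da; lia.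
have hU := card_uniform_partition huni hpart.
set U := cover P in hU hpart.
set W := ~: U.
have hW0 : 0 < #|W|.
  rewrite lt0n; apply/negP => /eqP W0; move/negP: hdiv; apply.
  have := cardsC U; rewrite -/W W0 addn0 hU => <-.
  exact: dvdn_mull.
have hinU x a : a \in X -> x \in cl a -> x \in U.
  move=> aX xa; rewrite /U cover_imset; apply/bigcupP; by exists a.
have hWN w : w \in W -> N w \subset W :\ w.
  move=> wW; apply/subsetP => x xw; rewrite in_setD1 (N_neq xw) /=.
  rewrite inE; apply/negP => /bigcupP [A /imsetP [a aX ->] xa].
  move: wW; rewrite inE => /negP; apply; apply: (hinU w a aX).
  by apply: (hclos a x w aX xa); rewrite N_sym.
have hWd w : w \in W -> deg w <= n - 3.
  move=> wW; have := hdeg w; rewrite leq_eqVlt => /orP [/eqP dw|]; last by lia.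
  move: wW; rewrite inE => /negP; case; apply: (hinU w w); first by rewrite inE dw.
  exact: setU11.
have hWd2 w : w \in W -> deg w <= #|W| - 1.
  move=> wW; have := subset_leq_card (hWN w wW); have := cardsD1 w W; rewrite wW; lia.
apply: leq_trans (sum_sub W _).
have : \sum_(v in W) maxn 1 (n - 1 - #|W|) <= \sum_(v in W) (n - 2 - deg v).
  by apply: leq_sum => v vW; have := hWd v vW; have := hWd2 v vW; lia.
rewrite sum_nat_const; set m := #|W| in hW0 *.
case: (leqP (n - 2) m) => hm.
  move=> h; apply: leq_trans h; apply: leq_trans hm _.
  by rewrite -{1}(muln1 m) leq_mul // leq_maxl.
have -> : maxn 1 (n - 1 - m) = n - 1 - m by lia.
move=> h; apply: leq_trans h; nia.
Qed.

End Graph.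

Lemma upper_graph (V : finType) (G : {set {set V}}) (sG : simple_graph G) n
  (hn : 5 <= n) (nT : ~~ contains G (T2 n)) (hdiv : ~~ (n - 1 %| #|V|)) :
  2 * #|G| <= (n - 2) * (#|V| - 1).
Proof.
rewrite -(handshake sG).
case: (boolP [exists v, n - 1 <= #|N G v|]) => [|ne]; first exact: caseA.
apply: caseB => // v; rewrite leqNgt; apply: contra ne => h.
by apply/existsP; exists v; lia.
Qed.


Section Lower.
Variables p k : nat.
Hypothesis kpos : 0 < k.

Definition G0 : {set {set 'I_p}} :=
  [set e | [exists u : 'I_p, exists v : 'I_p, [&& u != v, u %/ k == v %/ k & e == [set u; v]]]].

Lemma G0_simple : simple_graph G0.
Proof.
apply/forall_inP => e; rewrite inE => /existsP [u /existsP [v /and3P [uv _ /eqP ->]]].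
by rewrite cards2 uv.
Qed.

Lemma inG0 u v : ([set u; v] \in G0) = (u != v) && (u %/ k == v %/ k).
Proof.
rewrite inE; apply/existsP/andP => [[u' /existsP [v' /and3P [uv' bl /eqP e]]]|[uv bl]].
  have h2 : #|[set u; v]| = 2 by rewrite e cards2 uv'.
  split; first by move: h2; rewrite cards2; case: (u != v).
  have hu : u \in [set u'; v'] by rewrite -e !inE eqxx.
  have hv : v \in [set u'; v'] by rewrite -e !inE eqxx orbT.
  move: hu hv bl; rewrite !inE => /orP [] /eqP -> /orP [] /eqP -> //.
  by rewrite eq_sym.
by exists u; apply/existsP; exists v; rewrite uv bl eqxx.
Qed.


Lemma blk_card (c : nat) : #|[set u : 'I_p | u %/ k == c]| <= k.
Proof.
have inj : {in [set u : 'I_p | u %/ k == c] &,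
    injective (fun u : 'I_p => Ordinal (ltn_pmod u kpos))}.
  move=> x y; rewrite !inE => /eqP hx /eqP hy /(congr1 val) /= hm.
  by apply: val_inj; rewrite /= (divn_eq x k) (divn_eq y k) hx hy hm.
by have := @leq_card_in _ _ (fun u : 'I_p => Ordinal (ltn_pmod u kpos)) _ inj; rewrite card_ord.
Qed.

Lemma T2_mem n (i j : 'I_n) : T2edge n i j -> [set i; j] \in T2 n.
Proof. by move=> h; rewrite inE; apply/existsP; exists i; apply/existsP; exists j; rewrite eqxx. Qed.

Lemma G0_free n : 5 <= n -> k = n - 1 -> ~~ contains G0 (T2 n).
Proof.
move=> hn hk; apply/negP => /existsP [f /andP [/injectiveP finj /forall_inP fe]].
have hedge (i j : 'I_n) : T2edge n i j -> f i %/ k = f j %/ k.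
  move=> h; have := fe _ (T2_mem h); rewrite imsetU1 imset_set1.
  by rewrite inG0 => /andP [_ /eqP].
have n0 : 0 < n by lia.
have n3 : n - 3 < n by lia.
pose i0 := Ordinal n0. pose i3 := Ordinal n3.
have h03 : f i0 %/ k = f i3 %/ k by apply: hedge; rewrite /T2edge /=; apply/orP; left; lia.
have hall (j : 'I_n) : f j %/ k = f i0 %/ k.
  case: (posnP j) => [j0|jpos].
    by have -> : j = i0 by apply: val_inj.
  case: (leqP j (n - 3)) => hj.
    by symmetry; apply: hedge; rewrite /T2edge /= jpos hj.
  rewrite h03; symmetry; apply: hedge; rewrite /T2edge /= eqxx /=.
  have := ltn_ord j; lia.
have : [set f j | j in [set: 'I_n]] \subset [set u : 'I_p | u %/ k == f i0 %/ k].
  by apply/subsetP => x /imsetP [j _ ->]; rewrite inE hall.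
move/subset_leq_card; rewrite card_imset // cardsT card_ord.
move=> h1; have := leq_trans h1 (blk_card (f i0 %/ k)); lia.
Qed.


Lemma card_interval lo hi : lo <= hi -> hi <= p ->
  #|[set u : 'I_p | lo <= u < hi]| = hi - lo.
Proof.
move=> h1 h2.
have H (i : 'I_(hi - lo)) : lo + i < p by have := ltn_ord i; lia.
pose g (i : 'I_(hi - lo)) := Ordinal (H i).
have -> : [set u : 'I_p | lo <= u < hi] = g @: setT.
  apply/setP => u; rewrite inE; apply/idP/imsetP.
    move=> /andP [a b]; have hu : u - lo < hi - lo by lia.
    by exists (Ordinal hu) => //; apply: val_inj => /=; lia.
  by case=> i _ ->; rewrite /=; have := ltn_ord i; lia.
rewrite card_imset ?cardsT ?card_ord // => i j /(congr1 val) /= /eqP.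
by rewrite eqn_add2l => /eqP /val_inj.
Qed.

Definition gl (v : nat) := if v < p %/ k * k then k - 1 else p %% k - 1.

Lemma in_blk (u : 'I_p) c : c * k <= u < c.+1 * k -> u %/ k = c.
Proof.
case/andP => h1 h2; apply/eqP; rewrite eqn_leq leq_divRL // h1 /=.
by rewrite andbT -ltnS ltn_divLR.
Qed.

Lemma deg_G0 (v : 'I_p) : gl v <= #|N G0 v|.
Proof.
set Bl := [set u : 'I_p | v %/ k == u %/ k].
have -> : N G0 v = Bl :\ v.
  apply/setP => u; rewrite in_setD1 inN inG0 in_set; congr (_ && _).
  by rewrite eq_sym.
have hvB : v \in Bl by rewrite inE.
have hB : #|Bl| = #|Bl :\ v| + 1 by rewrite (cardsD1 v Bl) hvB addnC.
rewrite [#|Bl :\ v|](_ : _ = #|Bl| - 1); last by rewrite hB addnK.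
have hp := divn_eq p k.
rewrite /gl; case: ifP => hv.
  set c := v %/ k.
  have hc : c < p %/ k by rewrite /c ltn_divLR.
  have hck : c.+1 * k <= p %/ k * k by rewrite leq_mul2r hc orbT.
  have : [set u : 'I_p | c * k <= u < c * k + k] \subset Bl.
    apply/subsetP => u; rewrite !inE => hu; rewrite eq_sym; apply/eqP.
    by apply: in_blk; rewrite mulSn addnC.
  move/subset_leq_card; rewrite card_interval; last 2 first.
  - exact: leq_addr.
  - by move: hck; rewrite mulSn; lia.
  lia.
have hvq : v %/ k = p %/ k.
  apply: in_blk; rewrite leqNgt hv /=; exact: ltn_trans (ltn_ord v) (ltn_ceil p kpos).
have : [set u : 'I_p | p %/ k * k <= u < p] \subset Bl.
  apply/subsetP => u; rewrite !inE => /andP [h1 h2]; rewrite hvq eq_sym; apply/eqP.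
  apply: in_blk; rewrite h1 /=; exact: ltn_trans (ltn_ord u) (ltn_ceil p kpos).
move/subset_leq_card; rewrite card_interval //; last by lia.
lia.
Qed.

Lemma sum_gl : \sum_(v < p) gl v = p %/ k * k * (k - 1) + p %% k * (p %% k - 1).
Proof.
have hp := divn_eq p k.
rewrite -(big_mkord xpredT gl) (@big_cat_nat _ _ _ (p %/ k * k)) //; last by lia.
have e1 : \sum_(0 <= i < p %/ k * k) gl i = \sum_(0 <= i < p %/ k * k) (k - 1).
  by apply: eq_big_nat => i /andP [_ hi]; rewrite /gl hi.
have e2 : \sum_(p %/ k * k <= i < p) gl i = \sum_(p %/ k * k <= i < p) (p %% k - 1).
  by apply: eq_big_nat => i /andP [hi _]; rewrite /gl ltnNge hi.
rewrite e1 e2.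
rewrite !sum_nat_const_nat subn0; congr (_ + _).
by congr (_ * _); lia.
Qed.

Lemma G0_count : p %/ k * k * (k - 1) + p %% k * (p %% k - 1) <= 2 * #|G0|.
Proof.
rewrite -(handshake G0_simple) -sum_gl; apply: leq_sum => v _; exact: deg_G0.
Qed.

End Lower.


Unset Implicit Arguments.

Theorem corollary3p1 (p n : nat) (hn : 5 <= n) (hpn : n <= p)
    (hdiv : ~~ (n - 1 %| p)) :
  4 * (n - 2) * p <= 8 * ex p (T2 n) + (n - 1) ^ 2 /\
  2 * ex p (T2 n) <= (n - 2) * (p - 1).
Proof.
have kpos : 0 < n - 1 by lia.
have P0 : simple_graph (G0 p (n - 1)) && ~~ contains (G0 p (n - 1)) (T2 n).
  by rewrite G0_simple // G0_free.
split.
  have h1 : #|G0 p (n - 1)| <= ex p (T2 n) by rewrite /ex; apply: leq_bigmax_cond; exact: P0.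
  have h2 := G0_count p kpos.
  have hp := divn_eq p (n - 1).
  set E := ex p (T2 n) in h1 *; set k := n - 1 in kpos h1 h2 hp *; set Q := p %/ k * k in h2 hp; set r := p %% k in h2 hp.
  have hk : n - 2 = k - 1 by rewrite /k; lia.
  rewrite hk.
  have key : 4 * ((k - 1) * r) <= 4 * (r * (r - 1)) + k ^ 2.
    clear -kpos; case: r => [|r]; first by rewrite muln0.
    have -> : r.+1 - 1 = r by lia.
    case: (leqP (2 * r.+1) k) => h.
      have [d ->] : exists d, k = 2 * r.+1 + d by exists (k - 2 * r.+1); lia.
      have -> : 2 * r.+1 + d - 1 = 2 * r + d + 1 by lia.
      nia.
    have [d hd] : exists d, 2 * r.+1 = k + d by exists (2 * r.+1 - k); lia.
    have [j hj] : exists j, k = j.+1 by exists (k - 1); lia.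
    have e : n - 1 - 1 = j by lia.
    rewrite e hj in hd *; clear -hd; nia.
  rewrite -mulnA {1}hp mulnDr [(k - 1) * Q]mulnC.
  move: key h1 h2; clear; set a := Q * (k - 1); set b := r * (r - 1); set c := (k - 1) * r.
  lia.
rewrite /ex (bigmax_eq_arg (G0 p (n - 1))); last exact: P0.
case: arg_maxnP => // G /andP [sG nT] _.
have := upper_graph sG hn nT; rewrite card_ord; apply.
by [].
Qed.
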